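(* Let $X$ be a continuum, let $n\geq2$ be an integer, and let $f:X\to X$ be a map. Consider the statements: (1) $f$ is indecomposable; (2) $F_n(f)$ is indecomposable; (3) $SF_n(f)$ is indecomposable. Then (2) and (3) are equivalent, and (2) implies (1).
   Context: A continuum is a nonempty compact connected metric space. $F_n(X)$ is the set of nonempty subsets of $X$ with at most $n$ points, with the Hausdorff metric topology; $F_1(X)=\{\{x\}:x\in X\}$; $F_n(f)(A)=f(A)$. $SF_n(X)=F_n(X)/F_1(X)$ is the quotient collapsing $F_1(X)$ to a point, $q$ the quotient map, $F_X=q(F_1(X))$, and $SF_n(f)(\chi)=q(F_n(f)(q^{-1}(\chi)))$ for $\chi\neq F_X$, $SF_n(f)(F_X)=F_X$. A map $g:Z\to Z$ is indecomposable if for any two closed sets $A,B\subseteq Z$ with $g(A)\subseteq A$, $g(B)\subseteq B$, $\mathrm{int}(A)\neq\emptyset$ and $\mathrm{int}(B)\neq\emptyset$, one has $\mathrm{int}(A\cap B)\neq\emptyset$. *)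

(* Defs.v *)
From HB Require Import structures.
From mathcomp Require Import all_boot all_order all_algebra.
From mathcomp Require Import all_classical all_reals all_analysis.
Set Implicit Arguments. Unset Strict Implicit. Unset Printing Implicit Defensive.
Import Order.TTheory GRing.Theory Num.Theory.
Local Open Scope classical_set_scope.
Local Open Scope ring_scope.

Section Indec.
Variable (Z : Type) (opn : set Z -> Prop).

Definition int_ne (A : set Z) : Prop :=
  exists U : set Z, [/\ opn U, U !=set0 & U `<=` A].

Definition is_closed (A : set Z) : Prop := opn (~` A).

Definition indecomposable (g : Z -> Z) : Prop :=
  forall A B : set Z, is_closed A -> is_closed B ->
    g @` A `<=` A -> g @` B `<=` B ->
    int_ne A -> int_ne B -> int_ne (A `&` B).
End Indec.

Section Hyper.
Variables (R : realType) (X : metricType R).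

Definition is_Fn (n : nat) (A : set X) : Prop :=
  exists s : seq X, (0 < size s <= n)%N /\ A = [set x | x \in s].

Definition Fn (n : nat) := {A : set X | is_Fn n A}.

Definition hdist (A B : set X) : R :=
  Num.max (sup [set inf [set mdist a b | b in B] | a in A])
          (sup [set inf [set mdist a b | a in A] | b in B]).

Definition Fn_open (n : nat) (U : set (Fn n)) : Prop :=
  forall A : Fn n, U A ->
    exists2 e : R, 0 < e & forall B : Fn n, hdist (proj1_sig A) (proj1_sig B) < e -> U B.

Lemma is_Fn_image (n : nat) (f : X -> X) (A : Fn n) : is_Fn n (f @` proj1_sig A).
Proof.
case: A => A /= [s [hs ->]]; exists (map f s); rewrite size_map; split => //.
apply/seteqP; split => y /=.
  by case=> x xs <-; apply: map_f.
by case/mapP=> x xs ->; exists x.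
Qed.

Definition Fn_map (n : nat) (f : X -> X) (A : Fn n) : Fn n :=
  exist _ (f @` proj1_sig A) (is_Fn_image f A).

Definition is_single (A : set X) : Prop := exists x : X, A = [set x].

(* SF_n(X) = F_n(X)/F_1(X): None is the point F_X, Some A for A not in F_1(X) *)
Definition SF (n : nat) := option {A : Fn n | ~ is_single (proj1_sig A)}.

Definition SF_q (n : nat) (A : Fn n) : SF n :=
  match pselect (is_single (proj1_sig A)) with
  | left _ => None
  | right h => Some (exist _ A h)
  end.

Definition SF_open (n : nat) (U : set (SF n)) : Prop := Fn_open (@SF_q n @^-1` U).

Definition SF_map (n : nat) (f : X -> X) (c : SF n) : SF n :=
  match c with
  | None => None
  | Some A => SF_q (Fn_map f (proj1_sig A))
  end.
End Hyper.

(* Main.v *)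
Require Import Defs.
From HB Require Import structures.
From mathcomp Require Import all_boot all_order all_algebra.
From mathcomp Require Import all_classical all_reals all_analysis.
From mathcomp Require Import lra.
Import Order.TTheory GRing.Theory Num.Theory.
Local Open Scope classical_set_scope.
Local Open Scope ring_scope.
Set Implicit Arguments. Unset Strict Implicit.

Section Aux.
Variables (R : realType) (X : metricType R).
Local Notation d := (@mdist R X).

Lemma seq_bound (g : X -> R) (s : seq X) : exists M, forall x, x \in s -> g x <= M.
Proof.
elim: s => [|a s [M HM]]; first by exists 0.
exists (Num.max (g a) M) => x; rewrite inE => /orP [/eqP ->|/HM h].
  by rewrite le_max lexx.
by rewrite le_max h orbT.
Qed.

Lemma seq_max (g : X -> R) e (s : seq X) : (forall x, x \in s -> g x < e) ->
  exists2 m, m < e & forall x, x \in s -> g x <= m.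
Proof.
elim: s => [|a s IH] H.
  by exists (e - 1) => //; rewrite ltrBlDr ltrDl.
have [m me Hm] := IH (fun x xs => H x (@mem_behead _ (a :: s) x xs)).
exists (Num.max (g a) m); first by rewrite gt_max H ?mem_head ?me.
move=> x; rewrite inE => /orP [/eqP ->|/Hm h].
  by rewrite le_max lexx.
by rewrite le_max h orbT.
Qed.

Lemma Fn_bound n (A : set X) (g : X -> R) : is_Fn n A -> exists M, forall x, A x -> g x <= M.
Proof. case=> s [_ ->]; have [M HM] := seq_bound g s; by exists M. Qed.

Lemma Fn_max n (A : set X) (g : X -> R) e : is_Fn n A -> (forall a, A a -> g a < e) ->
  exists2 m, m < e & forall a, A a -> g a <= m.
Proof. case=> s [_ ->] H; have [m me Hm] := seq_max H; by exists m. Qed.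

Lemma Fn_ne n (A : set X) : is_Fn n A -> A !=set0.
Proof. case=> [[|a s] [/andP [hs _] ->]] //; exists a; by rewrite /= mem_head. Qed.

Lemma supinf_lt n m (A B : set X) (g : X -> X -> R) r : is_Fn n A -> is_Fn m B ->
  (forall x y, 0 <= g x y) ->
  sup [set inf [set g a b | b in B] | a in A] < r ->
  forall a, A a -> exists2 b, B b & g a b < r.
Proof.
move=> hA hB g0 hs a Aa.
have [b0 Bb0] := Fn_ne hB.
have lbI : forall a', has_lbound [set g a' b | b in B].
  by move=> a'; exists 0 => _ [b _ <-]; exact: g0.
have infle : forall a' b, B b -> inf [set g a' b | b in B] <= g a' b.
  by move=> a' b Bb; apply: (ge_inf (lbI a')); exists b.
have [M HM] := Fn_bound (fun a' => g a' b0) hA.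
have hsup : has_sup [set inf [set g a b | b in B] | a in A].
  split; first by exists (inf [set g a b | b in B]); exists a.
  exists M => _ [a' Aa' <-]; exact: le_trans (infle a' b0 Bb0) (HM a' Aa').
have : inf [set g a b | b in B] < r.
  by apply: le_lt_trans hs; apply: (sup_upper_bound hsup); exists a.
case/inf_lt; first by exists (g a b0), b0.
move=> _ [b Bb <-] h; by exists b.
Qed.

Lemma supinf_le n m (A B : set X) (g : X -> X -> R) r : is_Fn n A -> is_Fn m B ->
  (forall x y, 0 <= g x y) ->
  (forall a, A a -> exists2 b, B b & g a b <= r) ->
  sup [set inf [set g a b | b in B] | a in A] <= r.
Proof.
move=> hA hB g0 H; have [a0 Aa0] := Fn_ne hA.
apply: ge_sup; first by exists (inf [set g a0 b | b in B]), a0.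
move=> _ [a Aa <-]; have [b Bb gab] := H a Aa.
apply: le_trans gab; apply: ge_inf; last by exists b.
by exists 0 => _ [b' _ <-]; exact: g0.
Qed.

Lemma hdist_lt n (K L : set X) r : is_Fn n K -> is_Fn n L -> hdist K L < r ->
  (forall b, L b -> exists2 a, K a & d a b < r) /\
  (forall a, K a -> exists2 b, L b & d a b < r).
Proof.
move=> hK hL; rewrite /hdist gt_max => /andP [h1 h2]; split.
  exact: (supinf_lt (g := fun b a => d a b) hL hK (fun _ _ => mdist_ge0 _ _) h2).
exact: (supinf_lt (g := d) hK hL (fun _ _ => mdist_ge0 _ _) h1).
Qed.

Lemma hdist_le n (K L : set X) r : is_Fn n K -> is_Fn n L ->
  (forall a, K a -> exists2 b, L b & d a b <= r) ->
  (forall b, L b -> exists2 a, K a & d a b <= r) -> hdist K L <= r.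
Proof.
move=> hK hL H1 H2; rewrite /hdist ge_max; apply/andP; split.
  exact: (supinf_le (g := d) hK hL (fun _ _ => mdist_ge0 _ _) H1).
exact: (supinf_le (g := fun b a => d a b) hL hK (fun _ _ => mdist_ge0 _ _) H2).
Qed.

Lemma ball_openX (x : X) e : open (ball x e).
Proof.
rewrite openE => y; rewrite ballEmdist /= => hy.
apply/nbhs_ballP; exists (e - d x y) => /=; first by rewrite subr_gt0.
move=> z; rewrite ballEmdist /= => hz.
have := metric_triangle x y z; clear -hy hz; lra.
Qed.

Lemma noniso : connected [set: X] ->
  (forall x y : X, x = y) \/ (forall x e, 0 < e -> exists y, y <> x /\ d x y < e).
Proof.
move=> cX.
case: (pselect (forall x e, 0 < e -> exists y, y <> x /\ d x y < e)) => [h|h]; [by right|left].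
have [x [e [e0 He]]] : exists x e, 0 < e /\ forall y, d x y < e -> y = x.
  apply: contra_notP h => H x e e0; apply: contra_notP H => H'; exists x, e; split => // y dy.
  apply: contra_notP H' => yx; by exists y.
have Hx : [set x] = [set: X].
  apply: cX; first by exists x.
  - exists [set x]; last by rewrite setTI.
    rewrite openE => y /= ->; apply/nbhs_ballP; exists e => // z; rewrite ballEmdist /=.
    exact: He.
  - exists [set x]; last by rewrite setTI.
    apply: accessible_closed_set1; apply: hausdorff_accessible; exact: metric_hausdorff.
have h1 : forall y, y = x by move=> y; have : [set: X] y by []; rewrite -Hx.
by move=> a b; rewrite (h1 a) (h1 b).
Qed.

Section WithN.
Variable n : nat.
Local Notation F := (Fn X n).
Local Notation SFn := (SF X n).

Lemma single_Fn (x : X) : (0 < n)%N -> is_Fn n [set x].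
Proof.
move=> n1; exists [:: x]; split; first by rewrite /= n1.
apply/seteqP; split => z /=; first by move=> ->; rewrite inE.
by rewrite inE => /eqP.
Qed.

Lemma Fn_openI (U V : set F) : Fn_open U -> Fn_open V -> Fn_open (U `&` V).
Proof.
move=> hU hV K [UK VK]; have [e1 e10 H1] := hU K UK; have [e2 e20 H2] := hV K VK.
exists (Num.min e1 e2); first by rewrite lt_min e10 e20.
move=> L; rewrite lt_min => /andP [h1 h2]; split; [exact: H1|exact: H2].
Qed.

Lemma Fn_open_ext (U V : set F) : (forall K, U K <-> V K) -> Fn_open U -> Fn_open V.
Proof.
move=> E hU K /E UK; have [e e0 H] := hU K UK; exists e => // L /H /E //.
Qed.

Lemma single_closed : Fn_open (~` (fun K : F => is_single (proj1_sig K))).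
Proof.
move=> [K hK] /= nsK.
have [x Kx] := Fn_ne hK.
have [y [Ky yx]] : exists y, K y /\ y <> x.
  apply: contra_notP nsK => H; exists x; apply/seteqP; split => z /=.
    by move=> Kz; apply: contra_notP H => zx; exists z; split.
  by move=> ->.
exists (d x y / 2).
  by rewrite divr_gt0 // mdist_gt0; apply/eqP => E; exact: yx (esym E).
move=> [L hL] /= hd [z Lz].
have [_ H2] := hdist_lt hK hL hd.
have [b1 Lb1 d1] := H2 x Kx; have [b2 Lb2 d2] := H2 y Ky.
rewrite Lz /= in Lb1 Lb2; subst b1 b2.
have := metric_triangle x z y; rewrite (metric_sym z y) => ht; clear -d1 d2 ht; lra.
Qed.

Lemma sub_closed (A : set X) : open (~` A) -> Fn_open (~` (fun K : F => proj1_sig K `<=` A)).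
Proof.
move=> oA [K hK] /= nKA.
have [k [Kk nAk]] : exists k, K k /\ ~ A k.
  apply: contra_notP nKA => H k Kk; apply: contra_notP H => nA; by exists k.
have : nbhs k (~` A) by rewrite openE in oA; exact: oA.
move/nbhs_ballP => [e /= e0 He].
exists e => // [[L hL]] /= hd LA.
have [_ H2] := hdist_lt hK hL hd; have [l Ll dl] := H2 k Kk.
apply: (He l); [by rewrite ballEmdist | exact: LA].
Qed.

Lemma Fn_sub_ball (x : X) e : Fn_open (fun K : F => proj1_sig K `<=` ball x e).
Proof.
move=> [K hK] /= KB.
have KB' : forall k, K k -> d x k < e.
  by move=> k Kk; have := KB k Kk; rewrite ballEmdist.
have [m me Hm] := Fn_max hK KB'.
exists (e - m); first by rewrite subr_gt0.
move=> [L hL] /= hd l Ll; have [H1 _] := hdist_lt hK hL hd; have [k Kk dk] := H1 l Ll.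
rewrite ballEmdist /=; have := Hm k Kk; have := metric_triangle x k l; clear -dk; lra.
Qed.

Lemma NE : (2 <= n)%N -> (forall x e, 0 < e -> exists y, y <> x /\ d x y < e) ->
  forall V : set F, Fn_open V -> V !=set0 -> exists K, V K /\ ~ is_single (proj1_sig K).
Proof.
move=> n2 hiso V oV [K VK].
case: (pselect (is_single (proj1_sig K))) => [[x Kx]|ns]; last by exists K.
have [e e0 He] := oV K VK.
have [y [yx dy]] := hiso x e e0.
have hL : is_Fn n [set z | z \in [:: x; y]] by exists [:: x; y]; split.
exists (exist _ _ hL); split.
- apply: He => /=; rewrite Kx; apply: le_lt_trans dy.
  have hK : is_Fn n [set x] by rewrite -Kx; exact: proj2_sig K.
  apply: (hdist_le hK hL).
  + move=> a /= ->; exists x; first by rewrite /= inE eqxx.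
    by rewrite mdistxx mdist_ge0.
  + move=> b /=; rewrite !inE => /orP [/eqP ->|/eqP ->]; exists x => //.
    by rewrite mdistxx mdist_ge0.
- move=> /= [z hz].
  have hx : [set z | z \in [:: x; y]] x by rewrite /= mem_head.
  have hy : [set z | z \in [:: x; y]] y by rewrite /= !inE eqxx orbT.
  rewrite hz in hx hy; apply: yx; by rewrite hy hx.
Qed.

Definition CC (A : set F) : set SFn :=
  fun c => match c with None => True | Some a => A (proj1_sig a) end.
Definition WW (A : set F) : set SFn :=
  fun c => match c with None => False | Some a => A (proj1_sig a) end.

Lemma q_pre (A : set F) (K : F) : CC A (SF_q K) <-> (is_single (proj1_sig K) \/ A K).
Proof. rewrite /SF_q; case: pselect => [h|h] /=; split; auto; by case. Qed.

Lemma q_pre2 (A : set F) (K : F) : WW A (SF_q K) <-> (~ is_single (proj1_sig K) /\ A K).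
Proof. rewrite /SF_q; case: pselect => [h|h] /=; split; try by case. by split. Qed.

Lemma q_some (a : {A : F | ~ is_single (proj1_sig A)}) : SF_q (proj1_sig a) = Some a.
Proof.
case: a => K h /=; rewrite /SF_q; case: pselect => [h'|h']; first by exfalso; exact: h h'.
by congr (Some (exist _ _ _)); apply: Prop_irrelevance.
Qed.

Lemma q_surj (x0 : X) : (0 < n)%N -> forall c : SFn, exists K, SF_q K = c.
Proof.
move=> n1 [a|]; first by exists (proj1_sig a); exact: q_some.
exists (exist _ [set x0] (single_Fn x0 n1)); rewrite /SF_q; case: pselect => //= h.
by exfalso; apply: h; exists x0.
Qed.

Lemma q_comm (f : X -> X) (K : F) : SF_q (Fn_map f K) = SF_map f (SF_q K).
Proof.
case: (pselect (is_single (proj1_sig K))) => [[x hx]|h].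
- have -> : SF_q K = None.
    by rewrite /SF_q; case: pselect => // h'; exfalso; apply: h'; exists x.
  rewrite /= /SF_q; case: pselect => // h'; exfalso; apply: h'; exists (f x) => /=.
  by rewrite hx image_set1.
- have -> : SF_q K = Some (exist _ K h) by exact: q_some (exist _ K h).
  by [].
Qed.

Lemma W_open (V : set F) : Fn_open V -> SF_open (WW V).
Proof.
move=> oV; apply: (Fn_open_ext _ (Fn_openI single_closed oV)) => K; split => h.
  by apply/q_pre2.
by move/q_pre2: h.
Qed.

Lemma CC_closed (A : set F) : Fn_open (~` A) -> SF_open (~` CC A).
Proof.
move=> cA; apply: (Fn_open_ext _ (Fn_openI cA single_closed)) => K; split => h.
  by case: h => h1 h2 /q_pre [].
split => h'; apply: h; apply/q_pre; by [right|left].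
Qed.

Lemma CC_inv (f : X -> X) (A : set F) : Fn_map f @` A `<=` A -> SF_map f @` CC A `<=` CC A.
Proof.
move=> iA _ [[a|] Ca <-] //=.
apply/q_pre; right; apply: iA; by exists (proj1_sig a).
Qed.

Lemma CC_int (A : set F) : (2 <= n)%N ->
  (forall x e, 0 < e -> exists y, y <> x /\ d x y < e) ->
  int_ne (@Fn_open R X n) A -> int_ne (@SF_open R X n) (CC A).
Proof.
move=> n2 hiso [U [oU [K UK] UA]].
have [K1 [UK1 ns]] := NE n2 hiso oU (ex_intro _ K UK).
exists (WW U); split; first exact: W_open.
  by exists (Some (exist _ K1 ns)).
move=> [a|] //= Ua; exact: UA.
Qed.

End WithN.
End Aux.
Unset Implicit Arguments.

Lemma indec_triv (Z : Type) (opn : set Z -> Prop) g :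
  (forall a b : Z, a = b) -> opn setT -> indecomposable opn g.
Proof.
move=> E oT A B _ _ _ _ [U [_ [z Uz] UA]] [U' [_ [z' U'z'] U'B]].
exists setT; split => //; first by exists z.
move=> w _; split; [rewrite (E w z); exact: UA | rewrite (E w z'); exact: U'B].
Qed.

Theorem theorem8 (R : realType) (X : metricType R) (n : nat) (f : X -> X) :
  (2 <= n)%N ->
  [set: X] !=set0 -> compact [set: X] -> connected [set: X] ->
  continuous f ->
  (indecomposable (@Fn_open R X n) (Fn_map f) <->
   indecomposable (@SF_open R X n) (SF_map f)) /\
  (indecomposable (@Fn_open R X n) (Fn_map f) ->
   indecomposable (@open X) f).
Proof.
move=> n2 [x0 _] cpt cX fc.
have n1 : (0 < n)%N by apply: leq_trans n2.
split.
- case: (noniso cX) => [E|hiso].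
  + have EF : forall a b : Fn X n, a = b.
      move=> [A hA] [B hB]; have eAB : A = B.
        apply/seteqP; split => z _.
          by have [w Bw] := Fn_ne hB; rewrite (E z w).
        by have [w Aw] := Fn_ne hA; rewrite (E z w).
      subst B; congr exist; exact: Prop_irrelevance.
    have ES : forall a b : SF X n, a = b.
      have nS : forall a : {A : Fn X n | ~ is_single (proj1_sig A)}, False.
        move=> [[A hA] h] /=; apply: h; have [w Aw] := Fn_ne hA; exists w.
        apply/seteqP; split => z /=; first by move=> _; exact: E.
        by move=> ->.
      by case=> [a|] [b|] //; exfalso; exact: nS a.
    split=> _; apply: indec_triv => //.
      by move=> K _; exists 1.
    by move=> K _; exists 1.
  + split.
    * move=> HF C D cC cD iC iD [U [oU [c Uc] UC]] [U' [oU' [c' U'c'] U'D]].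
      pose A := @SF_q R X n @^-1` C; pose B := @SF_q R X n @^-1` D.
      have i1 : Fn_map f @` A `<=` A.
        move=> _ [K' AK' <-]; rewrite /A /preimage /= q_comm; apply: iC.
        by exists (SF_q K').
      have i2 : Fn_map f @` B `<=` B.
        move=> _ [K' AK' <-]; rewrite /B /preimage /= q_comm; apply: iD.
        by exists (SF_q K').
      have i3 : int_ne (@Fn_open R X n) A.
        exists (@SF_q R X n @^-1` U); split => //.
          by have [K0 hK0] := q_surj x0 n1 c; exists K0; rewrite /preimage /= hK0.
        by move=> K0 /UC.
      have i4 : int_ne (@Fn_open R X n) B.
        exists (@SF_q R X n @^-1` U'); split => //.
          by have [K0 hK0] := q_surj x0 n1 c'; exists K0; rewrite /preimage /= hK0.
        by move=> K0 /U'D.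
      have [V [oV [K VK] VAB]] := HF A B cC cD i1 i2 i3 i4.
      have [K1 [VK1 nsK1]] := NE n2 hiso oV (ex_intro _ K VK).
      exists (WW V); split; first exact: W_open.
        by exists (Some (exist _ K1 nsK1)).
      move=> [a|] //= Va; case: (VAB _ Va) => hA hB.
      rewrite /A /B /preimage /= q_some in hA hB; by split.
    * move=> HS A B cA cB iA iB jA jB.
      have [W [oW [c Wc] WCD]] := HS _ _ (CC_closed cA) (CC_closed cB)
        (CC_inv iA) (CC_inv iB) (CC_int n2 hiso jA) (CC_int n2 hiso jB).
      have [K0 qK0] := q_surj x0 n1 c.
      have PK0 : (@SF_q R X n @^-1` W) K0 by rewrite /preimage /= qK0.
      have [K1 [PK1 ns]] := NE n2 hiso oW (ex_intro _ K0 PK0).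
      exists ((@SF_q R X n @^-1` W) `&` ~` (fun K : Fn X n => is_single (proj1_sig K))); split.
      - apply: Fn_openI; [exact: oW | exact: single_closed].
      - by exists K1.
      move=> K2 [PK2 ns2]; have [h1 h2] := WCD _ PK2.
      move/q_pre: h1 => [//|hA]; move/q_pre: h2 => [//|hB]; by split.
- move=> HF A B cA cB iA iB [U [oU [x Ux] UA]] [U' [oU' [x' U'x'] U'B]].
  pose SA := fun K : Fn X n => proj1_sig K `<=` A.
  pose SB := fun K : Fn X n => proj1_sig K `<=` B.
  have intS : forall (A : set X) (U : set X) x, open U -> U x -> U `<=` A ->
      int_ne (@Fn_open R X n) (fun K : Fn X n => proj1_sig K `<=` A).
    move=> A0 U0 x1 oU0 U0x U0A.
    have : nbhs x1 U0 by rewrite openE in oU0; exact: oU0.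
    move/nbhs_ballP => [e /= e0 He].
    exists (fun K : Fn X n => proj1_sig K `<=` ball x1 e); split.
    + exact: Fn_sub_ball.
    + exists (exist _ [set x1] (single_Fn x1 n1)) => /= z ->.
      by rewrite ballEmdist /= mdistxx.
    + move=> K KB z Kz; apply: U0A; apply: He; exact: KB.
  have invS : forall A0 : set X, f @` A0 `<=` A0 ->
      Fn_map f @` (fun K : Fn X n => proj1_sig K `<=` A0) `<=`
      (fun K : Fn X n => proj1_sig K `<=` A0).
    move=> A0 iA0 _ [K SK <-] /= _ [z Kz <-]; apply: iA0; exists z => //; exact: SK.
  have [V [oV [[K hK] VK] VAB]] := HF SA SB (sub_closed cA) (sub_closed cB)
     (invS _ iA) (invS _ iB) (intS _ _ _ oU Ux UA) (intS _ _ _ oU' U'x' U'B).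
  have [e e0 He] := oV _ VK.
  have [k Kk] := Fn_ne hK.
  exists (ball k e); split; first exact: ball_openX.
    by exists k; rewrite ballEmdist /= mdistxx.
  move=> y; rewrite ballEmdist /= => dy.
  pose g := fun z : X => if z == k then y else z.
  have hgk : g k = y by rewrite /g eqxx.
  have gd : forall z, mdist z (g z) <= mdist k y.
    move=> z; rewrite /g; case: eqP => [->|_]; first by [].
    by rewrite mdistxx mdist_ge0.
  have hL := He (Fn_map g (exist _ K hK)).
  have hLV : V (Fn_map g (exist _ K hK)).
    apply: hL; apply: le_lt_trans dy.
    apply: (hdist_le hK (is_Fn_image g (exist _ K hK))).
    - move=> a Ka; exists (g a) => //; by exists a.
    - move=> _ [a Ka <-]; by exists a.
  have yL : proj1_sig (Fn_map g (exist _ K hK)) y by exists k.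
  have [SAL SBL] := VAB _ hLV; split; [exact: SAL | exact: SBL].
Qed.
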